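(* Let $w\in\mathcal C_b(E)$ and $\lambda\in\mathbb R$ satisfy the Bellman equation \[ w(x)=\sup_{\tau\in\mathcal T_{x,b}}\ln\mathbb E_x\Big[\exp\Big(\int_0^\tau (f(X_s)-\lambda)\,ds+Mw(X_\tau)\Big)\Big],\qquad x\in E. \] Then $\lambda\ge r(f)$.
   Context: $X=(X_t)_{t\ge0}$ is a standard Feller–Markov process on a filtered probability space, with values in a locally compact separable metric space $(E,\rho)$ with Borel $\sigma$-field $\mathcal E$; $\mathbb P_x,\mathbb E_x$ denote the law/expectation of $X$ started at $x$. $\mathcal C_b(E)$ is the space of bounded continuous real functions on $E$ with sup norm $\|\cdot\|$. $\mathcal T_{x,b}$ is the family of stopping times that are $\mathbb P_x$-a.s. bounded. $U\subseteq E$ is a fixed compact set. $f:E\to(-\infty,0]$ is continuous and bounded; $c:E\times U\to(-\infty,0]$ is continuous and bounded. The operator $M$ is $Mh(x):=\sup_{\xi\in U}(c(x,\xi)+h(\xi))$ for $h\in\mathcal C_b(E)$, $x\in E$. For bounded continuous $g$, $r(g):=\lim_{t\to\infty}\frac1t\ln\sup_{x\in E}\mathbb E_x\big[e^{\int_0^t g(X_s)ds}\big]$ (the limit exists). *)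

(* Defs.v *)
From HB Require Import structures.
From mathcomp Require Import all_boot all_order all_algebra.
From mathcomp Require Import all_classical all_reals all_analysis.
Set Implicit Arguments. Unset Strict Implicit. Unset Printing Implicit Defensive.
Import Order.TTheory GRing.Theory Num.Theory.
Import numFieldNormedType.Exports.
Local Open Scope classical_set_scope.
Local Open Scope ring_scope.

Section Defs.
Context {R : realType}.

Definition borel_sets (E : topologicalType) : set_system E :=
  smallest (sigma_algebra setT) open.

Definition loc_compact_space (E : topologicalType) :=
  forall x : E, exists K : set E, compact K /\ nbhs x K.

Definition separable_space (E : topologicalType) :=
  exists D : set E, countable D /\ closure D = setT.

Definition bounded_fun (T : Type) (g : T -> R) := exists C : R, forall x, `|g x| <= C.

Definition Cb (E : topologicalType) (g : E -> R) := continuous g /\ bounded_fun g.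

Definition C0 (E : topologicalType) (g : E -> R) :=
  continuous g /\
  forall eps : R, 0 < eps -> exists K : set E, compact K /\
    forall x, ~ K x -> `|g x| < eps.

Context {d : measure_display} {Om : measurableType d} {E : pseudoPMetricType R}.

Definition filtration (F : R -> set_system Om) :=
  (forall t, sigma_algebra setT (F t)) /\
  (forall t, F t `<=` measurable) /\
  (forall s t, 0 <= s -> s <= t -> F s `<=` F t).

Definition right_continuous_filtration (F : R -> set_system Om) :=
  forall t, 0 <= t -> F t = \bigcap_(u in [set u | t < u]) F u.

Definition adapted (F : R -> set_system Om) (X : R -> Om -> E) :=
  forall t, 0 <= t -> forall B, borel_sets B -> F t (X t @^-1` B).

Definition cadlag_paths (X : R -> Om -> E) :=
  forall w : Om,
    (forall t, 0 <= t -> (X s w @[s --> t^'+] --> X t w)) /\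
    (forall t, 0 < t -> cvg (X s w @[s --> t^'-])).

Definition expect (P : E -> probability Om R) (x : E) (Y : Om -> R) : R :=
  fine (\int[P x]_w (Y w)%:E).

Definition semigroup (P : E -> probability Om R) (X : R -> Om -> E)
  (t : R) (h : E -> R) : E -> R := fun x => expect P x (fun w => h (X t w)).

Definition markov_property (P : E -> probability Om R) (F : R -> set_system Om)
  (X : R -> Om -> E) :=
  forall x h s t, Cb h -> 0 <= s -> 0 <= t -> forall A, F t A ->
    (\int[P x]_(w in A) (h (X (t + s) w))%:E =
     \int[P x]_(w in A) (semigroup P X s h (X t w))%:E)%E.

Definition feller (P : E -> probability Om R) (X : R -> Om -> E) :=
  forall h, C0 h ->
    (forall t, 0 <= t -> C0 (semigroup P X t h)) /\
    (forall x, semigroup P X t h x @[t --> 0^'+] --> h x).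

Definition feller_markov (P : E -> probability Om R) (F : R -> set_system Om)
  (X : R -> Om -> E) :=
  filtration F /\ right_continuous_filtration F /\ adapted F X /\
  cadlag_paths X /\
  (forall x, P x (X 0 @^-1` [set x]) = 1%E) /\
  markov_property P F X /\ feller P X.

Definition stopping_time (F : R -> set_system Om) (tau : Om -> \bar R) :=
  (forall w, (0 <= tau w)%E) /\
  (forall t, 0 <= t -> F t [set w | (tau w <= t%:E)%E]).

Definition Txb (P : E -> probability Om R) (F : R -> set_system Om) (x : E)
  : set (Om -> \bar R) :=
  [set tau | stopping_time F tau /\
     exists T : R, P x [set w | (T%:E < tau w)%E] = 0%E].

Definition path_int (X : R -> Om -> E) (g : E -> R) (t : R) (w : Om) : R :=
  fine (\int[lebesgue_measure]_(s in `[0, t]) (g (X s w))%:E).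

Definition rate_fun (P : E -> probability Om R) (X : R -> Om -> E) (g : E -> R)
  : R -> R := fun t =>
  ln (sup (range (fun x => expect P x (fun w => expR (path_int X g t w))))) / t.

Definition r (P : E -> probability Om R) (X : R -> Om -> E) (g : E -> R) : R :=
  lim (rate_fun P X g t @[t --> +oo]).

End Defs.

Definition Mop {R : realType} {E : Type} (U : set E) (c : E -> E -> R)
  (h : E -> R) (x : E) : R := sup [set c x xi + h xi | xi in U].

Definition bellman_rhs {R : realType} {d : measure_display} {Om : measurableType d}
  {E : pseudoPMetricType R}
  (P : E -> probability Om R) (F : R -> set_system Om) (X : R -> Om -> E)
  (U : set E) (c : E -> E -> R) (f w : E -> R) (lambda : R) (x : E) : \bar R :=
  ereal_sup [set (ln (expect P x (fun om =>
      expR (path_int X (fun y => f y - lambda) (fine (tau om)) om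
            + Mop U c w (X (fine (tau om)) om)))))%:E
    | tau in Txb P F x].

(* Main.v *)
Require Import Defs.
From HB Require Import structures.
From mathcomp Require Import all_boot all_order all_algebra.
From mathcomp Require Import all_classical all_reals all_analysis.
From mathcomp Require Import lra.
Import Order.TTheory GRing.Theory Num.Theory.
Import numFieldNormedType.Exports.
Local Open Scope classical_set_scope.
Local Open Scope ring_scope.

Lemma meas_comp_countable (R : realType) (D : set R) (phi g : R -> R) :
  measurable_fun D phi -> countable (range phi) -> measurable_fun D (g \o phi).
Proof.
move=> mphi cr mD Y mY.
have -> : D `&` (g \o phi) @^-1` Y = D `&` phi @^-1` (g @^-1` Y `&` range phi).
  apply/seteqP; split => s [Ds H]; split => //=.
    by split => //=; exists s.
  by case: H.
apply: mphi => //; apply: countable_measurable; first exact: measurable_set1.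
apply: sub_countable cr; apply: subset_card_le; exact: subIsetr.
Qed.

Definition phin (R : realType) (n : nat) (s : R) : R :=
  ((Num.floor (s * n.+1%:R) + 1)%:~R / n.+1%:R).
Arguments phin {R}.

Lemma phin_nd (R : realType) n : nondecreasing_fun (@phin R n).
Proof.
move=> x y xy; rewrite /phin ler_wpM2r // ?invr_ge0 // ler_int lerD2r.
by apply: le_floor; rewrite ler_wpM2r.
Qed.

Lemma phin_countable (R : realType) n : countable (range (@phin R n)).
Proof.
apply: (@sub_countable _ _ _ [set: int]); last exact: countableP.
apply: (@card_le_trans _ _ _ ((fun k : int => (k + 1)%:~R / n.+1%:R : R) @` setT)).
  by apply: subset_card_le => _ [s _ <-]; exists (Num.floor (s * n.+1%:R)).
exact: card_image_le.
Qed.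

Lemma phin_gt (R : realType) n (s : R) : s < phin n s.
Proof.
rewrite /phin ltr_pdivlMr ?ltr0Sn //; exact: floorD1_gt.
Qed.

Lemma phin_le (R : realType) n (s : R) : phin n s <= s + n.+1%:R^-1.
Proof.
rewrite /phin ler_pdivrMr ?ltr0Sn // mulrDl mulVf ?pnatr_eq0 // intrD lerD2r.
exact: floor_le.
Qed.

Lemma phin_cvg (R : realType) (s : R) : phin ^~ s @ \oo --> s^'+.
Proof.
move=> A /=; rewrite /at_right /within => /nbhs_ballP [e /= e0 He].
exists (Num.truncn e^-1) => // n /= Hn; apply: He; last exact: phin_gt.
rewrite /ball /= distrC ger0_norm; last by rewrite subr_ge0 ltW // phin_gt.
rewrite ltrBlDl; apply: (le_lt_trans (@phin_le _ n s)); rewrite ltrD2l.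
rewrite -[e]invrK ltf_pV2 ?posrE ?invr_gt0 ?ltr0Sn //.
apply: (lt_le_trans (real_truncnS_gt _)); first by rewrite num_real.
by rewrite ler_nat ltnS.
Qed.

Lemma rc_meas (R : realType) (t : R) (g : R -> R) :
  (forall s, 0 <= s -> g x @[x --> s^'+] --> g s) -> measurable_fun `[0, t] g.
Proof.
move=> hg; apply: (@measurable_realfun.measurable_fun_cvg _ _ _ _ (fun n => g \o phin n)).
- move=> n; apply: meas_comp_countable; last exact: phin_countable.
  by apply: measurable_realfun.nondecreasing_measurable => //; exact: phin_nd.
- move=> s; rewrite /= in_itv /= => /andP[s0 _].
  exact: (cvg_comp _ _ (@phin_cvg _ s) (hg s s0)).
Qed.

Section PI.
Variable R : realType.
Local Notation mu := (@lebesgue_measure R).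

Lemma int_bounded_integrable (t : R) (g : R -> R) (C : R) :
  measurable_fun `[0, t] g -> (forall s, `|g s| <= C) ->
  mu.-integrable `[0, t] (EFin \o g).
Proof.
move=> mg gC; apply: measurable_bounded_integrable => //.
  set m := (X in (X < _)%E).
  have -> : m = (if (0:R) < t then (t%:E - 0%:E)%E else 0%E) by exact: lebesgue_measure_itv.
  by case: ifP => _; rewrite ?ltry.
exists C; split; first by rewrite num_real.
by move=> M CM x _ /=; rewrite (le_trans (gC x)) // ltW.
Qed.

Lemma mu01 (t : R) : 0 <= t -> mu `[0, t] = t%:E.
Proof.
move=> t0; rewrite lebesgue_measure_itv /= lte_fin; case: ifP => [_|]; first by rewrite sube0.
by move/negbT; rewrite -leNgt => tle; congr (_%:E); apply/eqP; rewrite eq_le tle t0.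
Qed.

Lemma pint_sub (t lam C : R) (g : R -> R) : 0 <= t -> measurable_fun `[0,t] g ->
  (forall s, `|g s| <= C) ->
  fine (\int[mu]_(s in `[0,t]) (g s - lam)%:E) =
  fine (\int[mu]_(s in `[0,t]) (g s)%:E) - lam * t.
Proof.
move=> t0 mg gC.
have ig := int_bounded_integrable _ _ _ mg gC.
have ic : mu.-integrable `[0,t] (EFin \o cst (- lam)).
  apply: (int_bounded_integrable _ _ `|lam|) => // s; by rewrite normrN.
have -> : (fun s => (g s - lam)%:E) = (EFin \o g) \+ (EFin \o cst (- lam)).
  by apply/funext => s /=; rewrite EFinD.
rewrite integralD_EFin // fineD; try exact: integrable_fin_num.
rewrite -mulNr; congr (_ + _).
rewrite (_ : EFin \o cst (-lam) = cst (-lam)%:E) // integral_cst //.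
set m := (X in (_ * X)%E); have -> : m = t%:E by exact: mu01.
by [].
Qed.

Lemma pint_bounds (t C : R) (g : R -> R) : 0 <= t -> measurable_fun `[0,t] g ->
  (forall s, `|g s| <= C) -> (forall s, g s <= 0) ->
  - C * t <= fine (\int[mu]_(s in `[0,t]) (g s)%:E) <= 0.
Proof.
move=> t0 mg gC g0.
have ig := int_bounded_integrable _ _ _ mg gC.
have ic : forall r, mu.-integrable `[0,t] (EFin \o cst r).
  by move=> r; apply: (int_bounded_integrable _ _ `|r|).
apply/andP; split.
  have := le_integral _ (ic (- C)) ig.
  rewrite (_ : EFin \o cst (-C) = cst (-C)%:E) // integral_cst //.
  set m := (X in (_ * X)%E); have -> : m = t%:E by exact: mu01.
  move=> h; have {h} : ((- C * t)%:E <= \int[mu]_(s in `[0%R,t]) (g s)%:E)%E.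
    rewrite EFinM; apply: h => // x _; rewrite /= lee_fin; exact: lerNnormlW.
  by move/fine_le; apply => //; exact: integrable_fin_num.
have := le_integral _ ig (ic 0).
rewrite (_ : EFin \o cst 0 = cst 0%:E) // integral_cst // mul0e.
move=> h; apply: fine_le0; apply: h => // x _; rewrite /= lee_fin; exact: g0.
Qed.
End PI.

Section Inner.
Local Open Scope ereal_scope.
Context (R : realType) (d : measure_display) (T : measurableType d).
Variable mu : {measure set T -> \bar R}.

Lemma inner_le (f1 f2 : T -> \bar R) :
  (forall x, 0 <= f1 x) -> (forall x, f1 x <= f2 x) ->
  \int[mu]_x f1 x <= \int[mu]_x f2 x.
Proof.
move=> f10 f12; have f20 : forall x, 0 <= f2 x by move=> x; exact: le_trans (f10 x) (f12 x).
rewrite !ge0_integralTE //; apply: le_ereal_sup => _ [h hf <-]; exists h => //= x.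
exact: le_trans (hf x) (f12 x).
Qed.

Lemma inner_scale (k : R) (f : T -> \bar R) : (0 < k)%R -> (forall x, 0 <= f x) ->
  k%:E * \int[mu]_x f x <= \int[mu]_x (k%:E * f x).
Proof.
move=> k0 f0; have kf0 : forall x, 0 <= k%:E * f x.
  by move=> x; rewrite mule_ge0 // lee_fin ltW.
rewrite !ge0_integralTE // -ereal_sup_pZl //; apply: ge_ereal_sup => _ [_ [h hf <-] <-].
apply: ereal_sup_ubound; exists (scale_nnsfun h (ltW k0)).
  by move=> x /=; rewrite EFinM lee_pmul2l ?lte_fin.
exact: sintegralrM.
Qed.
End Inner.

Lemma ebound (R : realType) (x : \bar R) (a b : R) :
  (a%:E <= x)%E -> (x <= b%:E)%E -> x = (fine x)%:E /\ a <= fine x <= b.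
Proof. by case: x => [r| |] //=; rewrite !lee_fin => -> ->. Qed.

Theorem lemma2p1
  (R : realType) (E : pseudoPMetricType R)
  (hE_haus : hausdorff_space E) (hE_lc : loc_compact_space E) (hE_sep : separable_space E)
  (d : measure_display) (Om : measurableType d)
  (P : E -> probability Om R) (F : R -> set_system Om) (X : R -> Om -> E)
  (hX : feller_markov P F X)
  (U : set E) (hU : compact U) (hU0 : U !=set0)
  (f : E -> R) (hf : Cb f) (hf0 : forall x, f x <= 0)
  (c : E -> E -> R)
  (hc : {within [set p : E * E | U p.2], continuous (fun p : E * E => c p.1 p.2)})
  (hcb : exists C : R, forall x xi, U xi -> `|c x xi| <= C)
  (hc0 : forall x xi, U xi -> c x xi <= 0)
  (hr : cvg (rate_fun P X f t @[t --> +oo]))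
  (w : E -> R) (hw : Cb w) (lambda : R)
  (hbell : forall x, (w x)%:E = bellman_rhs P F X U c f w lambda x) :
  r P X f <= lambda.
Proof.
case: hX => [[Hsig _] [_ [_ [Hcad _]]]].
case: hf => [fcont [Cf hCf]]; case: hw => [_ [Cw hCw]]; case: hcb => [Cc hCc].
case: hU0 => [xi0 Uxi0].
have Cw0 : 0 <= Cw by exact: le_trans (normr_ge0 _) (hCw xi0).
have Cc0 : 0 <= Cc by exact: le_trans (normr_ge0 _) (hCc xi0 xi0 Uxi0).
have hM : forall y, - (Cc + Cw) <= Mop U c w y <= Cw.
  move=> y; rewrite /Mop.
  have ne : [set c y xi + w xi | xi in U] !=set0 by exists (c y xi0 + w xi0), xi0.
  have ub : ubound [set c y xi + w xi | xi in U] Cw.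
    move=> _ [xi Uxi <-]; rewrite -[Cw]add0r lerD //; first exact: hc0.
    exact: le_trans (ler_norm _) (hCw xi).
  apply/andP; split; last exact: ge_sup.
  apply: le_trans (ub_le_sup _ _); last by exists xi0.
    rewrite opprD lerD //; apply: lerNnormlW; [exact: hCc | exact: hCw].
  by exists Cw.
have hpath : forall t om, 0 <= t ->
    - Cf * t <= path_int X f t om <= 0 /\
    path_int X (fun y => f y - lambda) t om = path_int X f t om - lambda * t.
  move=> t om t0.
  have mg : measurable_fun `[0, t] (fun s => f (X s om)).
    apply: rc_meas => s s0.
    exact: (cvg_comp _ _ ((Hcad om).1 s s0) (fcont (X s om))).
  split; first exact: (pint_bounds _ _ Cf _ t0 mg (fun s => hCf _) (fun s => hf0 _)).
  exact: (pint_sub _ _ lambda Cf _ t0 mg (fun s => hCf _)).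
have key : forall t, 0 < t -> forall x,
   expR (- Cf * t) <= expect P x (fun om => expR (path_int X f t om)) <=
   expR (lambda * t + (Cc + Cw + Cw)).
  move=> t tpos x; have t0 := ltW tpos.
  set H := fun om => expR (path_int X f t om).
  set G := fun om => expR (path_int X (fun y => f y - lambda) t om + Mop U c w (X t om)).
  have hb : ln (expect P x G) <= w x.
    rewrite -lee_fin hbell /bellman_rhs; apply: ereal_sup_ubound.
    exists (fun _ => t%:E) => //; split.
      split; first by move=> _; rewrite lee_fin.
      move=> t1 _; have [tt1|tt1] := leP t t1.
        rewrite (_ : [set om | (t%:E <= t1%:E)%E] = setT); last by apply/seteqP; split => // om _ /=; rewrite lee_fin.
        have [H0 HC _] := Hsig t1; by have := HC _ H0; rewrite setD0.
      rewrite (_ : [set om | (t%:E <= t1%:E)%E] = set0); last first.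
        by apply/seteqP; split => // om /=; rewrite lee_fin leNgt tt1.
      by case: (Hsig t1).
    exists t; rewrite (_ : [set om | (t%:E < t%:E)%E] = set0) ?measure0 //.
    by apply/seteqP; split => // om /=; rewrite ltxx.
  have cstE : forall r : R, (\int[P x]_om (cst r%:E) om = r%:E)%E.
    move=> r; rewrite integral_cst //.
    set m := (X in (_ * X)%E); have -> : m = 1%E by exact: probability_setT.
    by rewrite mule1.
  have IHlo : ((expR (- Cf * t))%:E <= \int[P x]_om (H om)%:E)%E.
    rewrite -cstE; apply: inner_le => om; first by rewrite lee_fin expR_ge0.
    by rewrite /= /H lee_fin ler_expR; case: (hpath t om t0) => /andP[].
  have IHhi : (\int[P x]_om (H om)%:E <= 1%:E)%E.
    rewrite -cstE; apply: inner_le => om; first by rewrite lee_fin expR_ge0.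
    by rewrite /= /H lee_fin -expR0 ler_expR; case: (hpath t om t0) => /andP[].
  have IGhi : (\int[P x]_om (G om)%:E <= (expR (- lambda * t + Cw))%:E)%E.
    rewrite -cstE; apply: inner_le => om; first by rewrite lee_fin expR_ge0.
    rewrite /= /G lee_fin ler_expR; case: (hpath t om t0) => /andP[_ h1] ->.
    by case/andP: (hM (X t om)) => _ h2; lra.
  have IGlo : ((expR (- lambda * t - (Cc + Cw)))%:E * \int[P x]_om (H om)%:E <=
               \int[P x]_om (G om)%:E)%E.
    apply: le_trans; first apply: inner_scale.
    - exact: expR_gt0.
    - by move=> om; rewrite lee_fin expR_ge0.
    apply: inner_le => om; first by rewrite -EFinM lee_fin mulr_ge0 // expR_ge0.
    rewrite -EFinM lee_fin /H /G -expRD ler_expR; case: (hpath t om t0) => _ ->.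
    by case/andP: (hM (X t om)) => h2 _; lra.
  have [IHE /andP[eH1 eH2]] := ebound _ _ _ _ IHlo IHhi.
  rewrite IHE -EFinM in IGlo.
  have [_ /andP[eG1 eG2]] := ebound _ _ _ _ IGlo IGhi.
  rewrite /expect; set eH := fine _ in IHE eH1 eH2 IGlo eG1 *.
  set eG := fine _ in eG1 eG2.
  have hb' : ln eG <= w x := hb.
  have eG0 : 0 < eG.
    apply: lt_le_trans eG1; apply: mulr_gt0; first exact: expR_gt0.
    exact: lt_le_trans (expR_gt0 _) eH1.
  have eGle : eG <= expR Cw.
    rewrite -(lnK (x:=eG)) ?posrE // ler_expR.
    exact: le_trans hb' (le_trans (ler_norm _) (hCw x)).
  apply/andP; split => //.
  have -> : eH = expR (lambda * t + (Cc + Cw)) * (expR (- lambda * t - (Cc + Cw)) * eH).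
    by rewrite mulrA -expRD (_ : _ + _ = 0) ?expR0 ?mul1r //; rewrite mulNr; lra.
  rewrite (_ : lambda * t + (Cc + Cw + Cw) = lambda * t + (Cc + Cw) + Cw); last by lra.
  rewrite [X in _ <= X]expRD ler_pM2l ?expR_gt0 //; exact: le_trans eG1 eGle.
set Q := Cc + Cw + Cw.
have Q0 : 0 <= Q by rewrite /Q; lra.
have rb : forall t, 0 < t -> rate_fun P X f t <= lambda + Q / t.
  move=> t tpos; rewrite /rate_fun.
  set S := sup _.
  have ne : range (fun x => expect P x (fun om => expR (path_int X f t om))) !=set0.
    by exists (expect P xi0 (fun om => expR (path_int X f t om))), xi0.
  have ub : ubound (range (fun x => expect P x (fun om => expR (path_int X f t om))))
      (expR (lambda * t + Q)).
    by move=> _ [x _ <-]; case/andP: (key t tpos x).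
  have S0 : 0 < S.
    apply: lt_le_trans (expR_gt0 (- Cf * t)) _.
    case/andP: (key t tpos xi0) => h _; apply: le_trans h _.
    by apply: ub_le_sup; [exists (expR (lambda * t + Q)) | exists xi0].
  have SB : S <= expR (lambda * t + Q) by exact: ge_sup.
  rewrite ler_pdivrMr // mulrDl divfK ?gt_eqF //.
  by rewrite -(expRK (lambda * t + Q)) ler_ln ?posrE ?expR_gt0.
apply/ler_addgt0Pr => e e0; apply: limr_le => //.
exists (Num.max 1 (Q / e)); split; first by rewrite num_real.
move=> t; rewrite gt_max => /andP[t1 tQ]; have tpos : 0 < t by lra.
apply: le_trans (rb t tpos) _; rewrite lerD2l ler_pdivrMr //.
by move: tQ; rewrite ltr_pdivrMr // mulrC => /ltW.
Qed.
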